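(* Let $\mathbf L=(L,\vee,\wedge,0,1)$ be a complemented lattice with $0\ne1$ and $D$ a deductive system of $\mathbf L$. Then: (i) $D$ is an order filter of $\mathbf L$ (i.e. $a\in D$ and $a\le b$ imply $b\in D$); (ii) if $x\to y\subseteq D$ for all $x,y\in D$, then $D$ is a filter of $\mathbf L$.
   Context: For $a\in L$, $a^+:=\{x\in L\mid a\vee x=1,\ a\wedge x=0\}$ (the set of all complements of $a$), and $a\to b:=\{x\vee(a\wedge b)\mid x\in a^+\}$. A deductive system of $\mathbf L$ is a subset $D\subseteq L$ such that $1\in D$, and whenever $a\in D$, $b\in L$ and $a\to b\subseteq D$, then $b\in D$. A filter is a non-empty order filter closed under $\wedge$. *)

(* Defs.v *)
From mathcomp Require Import all_boot all_order.
Set Implicit Arguments. Unset Strict Implicit. Unset Printing Implicit Defensive.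
Import Order.Theory.
Local Open Scope order_scope.

Definition compls {d} {L : tbLatticeType d} (a : L) : L -> Prop :=
  fun x => a `|` x = \top /\ a `&` x = \bot.

Definition complemented {d} (L : tbLatticeType d) : Prop :=
  forall a : L, exists x, compls a x.

Definition arrow {d} {L : tbLatticeType d} (a b : L) : L -> Prop :=
  fun z => exists2 x, compls a x & z = x `|` (a `&` b).

Definition lsubset {T} (A B : T -> Prop) : Prop := forall z, A z -> B z.

Definition deductive_system {d} {L : tbLatticeType d} (D : L -> Prop) : Prop :=
  D \top /\ (forall a b : L, D a -> lsubset (arrow a b) D -> D b).

Definition order_filter {d} {L : tbLatticeType d} (D : L -> Prop) : Prop :=
  forall a b : L, D a -> a <= b -> D b.

Definition lattice_filter {d} {L : tbLatticeType d} (D : L -> Prop) : Prop :=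
  (exists a, D a) /\ order_filter D /\ (forall a b, D a -> D b -> D (a `&` b)).

(* Main.v *)
Require Import Defs.
From mathcomp Require Import all_boot all_order.
Import Order.Theory.
Local Open Scope order_scope.

Theorem lemma1 (d : Order.disp_t) (L : tbLatticeType d) (D : L -> Prop) :
  complemented L -> (\bot : L) != \top -> deductive_system D ->
  order_filter D /\
  ((forall x y : L, D x -> D y -> lsubset (arrow x y) D) -> lattice_filter D).
Proof.
move=> _ _ [Dtop DS].
have OF : order_filter D.
  move=> a b Da ab; apply: (DS a b Da) => z [x [hx _] ->].
  by rewrite (meet_idPl ab) joinC hx.
split=> // H; split; first by exists \top.
split=> // a b Da Db; apply: (DS a (a `&` b) Da) => z [x hx ->].
rewrite meetA meetxx; apply: (H a b Da Db); by exists x.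
Qed.
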